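(* Let $W_2\in\{M_2,S_2\}$ and let $\phi:W_2\to W_2$ be a linear map with $\sigma_{\mathcal{K}}(\phi(A))=\sigma_{\mathcal{K}}(A)$ for all $A\in W_2$. Then $\operatorname{tr}(\phi(A))=\operatorname{tr}(A)$ for all $A\in W_2$, and either $\operatorname{antitr}(\phi(A))=\operatorname{antitr}(A)$ for all $A\in W_2$, or $\operatorname{antitr}(\phi(A))=-\operatorname{antitr}(A)$ for all $A\in W_2$.
   Context: $M_2$: real $2\times2$ matrices; $S_2$: symmetric ones. For $A=\begin{bmatrix}a&b\\c&d\end{bmatrix}$, $\operatorname{tr}(A)=a+d$ and the anti-trace is $\operatorname{antitr}(A)=b+c$. Lorentz cone $\mathcal{K}=\{(x_1,x_2)^T:|x_1|\le x_2\}$; a real $\lambda$ is an L-eigenvalue of $A$ if there is a nonzero $x\in\mathcal{K}$ with $(A-\lambda I)x\in\mathcal{K}$ and $x^T(A-\lambda I)x=0$; $\sigma_{\mathcal{K}}(A)$ is the set of L-eigenvalues. *)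

(* Defs.v *)
From HB Require Import structures.
From mathcomp Require Import all_boot all_order all_algebra.
Set Implicit Arguments. Unset Strict Implicit. Unset Printing Implicit Defensive.
Import Order.TTheory GRing.Theory Num.Theory.
Local Open Scope ring_scope.

(* Indices 0 and 1 of 'I_2: entries x_1 = x 0 0, x_2 = x 1 0. *)
Definition i0 : 'I_2 := ord0.
Definition i1 : 'I_2 := ord_max.

Definition lorentz {R : realFieldType} (x : 'cV[R]_2) : Prop :=
  `|x i0 0| <= x i1 0.

Definition antitr {R : realFieldType} (A : 'M[R]_2) : R := A i0 i1 + A i1 i0.

Definition L_eigenvalue {R : realFieldType} (A : 'M[R]_2) (lam : R) : Prop :=
  exists x : 'cV[R]_2, [/\ x != 0, lorentz x, lorentz ((A - lam%:M) *m x)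
                         & (x^T *m (A - lam%:M) *m x) 0 0 = 0].

Definition L_spectrum {R : realFieldType} (A : 'M[R]_2) : R -> Prop :=
  fun lam => L_eigenvalue A lam.

(* W_2: all of M_2 (sym = false) or the symmetric matrices S_2 (sym = true) *)
Definition inW2 {R : realFieldType} (sym : bool) (A : 'M[R]_2) : Prop :=
  if sym then A^T = A else True.

(* Main.v *)
Require Import Defs.
From HB Require Import structures.
From mathcomp Require Import all_boot all_order all_algebra.
From mathcomp Require Import reals.
From mathcomp Require Import ring lra.
From Stdlib Require Import Classical.
Import Order.TTheory GRing.Theory Num.Theory.
Local Open Scope ring_scope.

Section Aux.
Variable R : realFieldType.
Implicit Types (A B M N : 'M[R]_2) (x : 'cV[R]_2).

Lemma lift01 : lift ord0 ord0 = i1 :> 'I_2.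
Proof. by apply/val_inj. Qed.

Lemma ord2 (i : 'I_2) : i = i0 \/ i = i1.
Proof.
case: i => [[|[|n]] Hn]; [left|right|by []]; by apply/val_inj.
Qed.

Lemma ordcol (j : 'I_1) : j = 0.
Proof. by case: j => [[|n] Hn]; apply/val_inj. Qed.

Lemma mul0E A l x : ((A - l%:M) *m x) i0 0 = (A i0 i0 - l) * x i0 0 + A i0 i1 * x i1 0.
Proof. rewrite !mxE !big_ord_recl big_ord0 !mxE /= lift01 /i0. rewrite mulr1n mulr0n. ring. Qed.

Lemma mul1E A l x : ((A - l%:M) *m x) i1 0 = A i1 i0 * x i0 0 + (A i1 i1 - l) * x i1 0.
Proof. rewrite !mxE !big_ord_recl big_ord0 !mxE /= lift01 /i0 /i1 /=. rewrite mulr1n mulr0n. ring. Qed.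

Lemma quadE A l x : (x^T *m (A - l%:M) *m x) 0 0 =
  x i0 0 * ((A i0 i0 - l) * x i0 0 + A i0 i1 * x i1 0) +
  x i1 0 * (A i1 i0 * x i0 0 + (A i1 i1 - l) * x i1 0).
Proof.
have h0 := mul0E A l x; have h1 := mul1E A l x; rewrite mxE in h0; rewrite mxE in h1.
rewrite -mulmxA !mxE !big_ord_recl big_ord0 !mxE /= lift01.
rewrite -/i0 h0 h1 /i0. ring.
Qed.

Definition pf A := (A i0 i0 + A i0 i1 + A i1 i0 + A i1 i1) / 2.
Definition sf A := (A i0 i0 - A i0 i1 - A i1 i0 + A i1 i1) / 2.
Definition qf A := (A i1 i0 + A i1 i1 - A i0 i0 - A i0 i1) / 2.
Definition rf A := (A i0 i1 - A i0 i0 + A i1 i1 - A i1 i0) / 2.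
Definition chr A l := (A i0 i0 - l) * (A i1 i1 - l) - A i0 i1 * A i1 i0.

Lemma sign_lem (x0 x1 y0 y1 : R) : `|x0| <= x1 -> `|y0| <= y1 -> 0 < x1 -> 0 < y1 ->
  x0 * y0 + x1 * y1 = 0 -> (x0 = x1 /\ y0 = - y1) \/ (x0 = - x1 /\ y0 = y1).
Proof.
move=> hx hy px py e.
case: (lerP 0 x0) => sx; case: (lerP 0 y0) => sy.
- exfalso; nra.
- rewrite ger0_norm // in hx; rewrite ltr0_norm // in hy. left; split; nra.
- rewrite ltr0_norm // in hx; rewrite ger0_norm // in hy. right; split; nra.
- exfalso; rewrite ltr0_norm // in hx; rewrite ltr0_norm // in hy; nra.
Qed.

Lemma nec_real (a b c d l x0 x1 : R) : (x0 != 0 \/ x1 != 0) -> `|x0| <= x1 ->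
  `|(a-l)*x0 + b*x1| <= c*x0 + (d-l)*x1 ->
  x0*((a-l)*x0+b*x1) + x1*(c*x0+(d-l)*x1) = 0 ->
  (l = (a+b+c+d)/2 /\ 0 <= (c+d-a-b)/2) \/ (l = (a-b-c+d)/2 /\ 0 <= (b-a+d-c)/2)
  \/ (a-l)*(d-l) - b*c = 0.
Proof.
move=> nz hx hy e.
set y0 := (a-l)*x0 + b*x1 in hy e; set y1 := c*x0 + (d-l)*x1 in hy e.
have n0 : 0 <= `|x0| := normr_ge0 _.
have n1 : 0 <= `|y0| := normr_ge0 _.
case: (eqVneq y1 0) => Y1.
  have Y0 : y0 = 0 by apply/eqP; rewrite -normr_le0 -Y1.
  right; right.
  have e0 : ((a-l)*(d-l) - b*c) * x0 = (d-l) * y0 - b * y1 by rewrite /y0 /y1; ring.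
  have e1 : ((a-l)*(d-l) - b*c) * x1 = (a-l) * y1 - c * y0 by rewrite /y0 /y1; ring.
  rewrite Y0 Y1 in e0 e1.
  case: nz => nz.
    have : ((a-l)*(d-l) - b*c) * x0 = 0 by rewrite e0; ring.
    by move/eqP; rewrite mulf_eq0 (negbTE nz) orbF => /eqP.
  have : ((a-l)*(d-l) - b*c) * x1 = 0 by rewrite e1; ring.
  by move/eqP; rewrite mulf_eq0 (negbTE nz) orbF => /eqP.
have py : 0 < y1 by rewrite lt_def Y1 /=; apply: le_trans hy.
case: (eqVneq x1 0) => X1.
  exfalso; have X0 : x0 = 0 by apply/eqP; rewrite -normr_le0 -X1.
  by case: nz; rewrite ?X0 ?X1 eqxx.
have px : 0 < x1 by rewrite lt_def X1 /=; apply: le_trans hx.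
case: (sign_lem _ _ _ _ hx hy px py e) => [[ex ey]|[ex ey]].
- left; move: ey; rewrite /y0 /y1 ex => ey.
  have hl : (a + b + c + d - 2 * l) * x1 = 0 by nra.
  have hl' : a + b + c + d - 2 * l = 0.
    by move/eqP: hl; rewrite mulf_eq0 (negbTE X1) orbF => /eqP.
  split; first by lra.
  have : 0 < (c + d - l) * x1.
    have E : y1 = (c+d-l)*x1 by rewrite /y1 ex; ring.
    by rewrite -E.
  rewrite pmulr_lgt0 // => h; lra.
- right; left; move: ey; rewrite /y0 /y1 ex => ey.
  have hl : (a - b - c + d - 2 * l) * x1 = 0 by nra.
  have hl' : a - b - c + d - 2 * l = 0.
    by move/eqP: hl; rewrite mulf_eq0 (negbTE X1) orbF => /eqP.
  split; first by lra.
  have : 0 < (- c + d - l) * x1.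
    have E : y1 = (- c + d - l) * x1 by rewrite /y1 ex; ring.
    by rewrite -E.
  rewrite pmulr_lgt0 // => h; lra.
Qed.

Lemma nec A l : L_eigenvalue A l ->
  (l = pf A /\ 0 <= qf A) \/ (l = sf A /\ 0 <= rf A) \/ chr A l = 0.
Proof.
case=> x [nz lx ly q]; move: ly q; rewrite /lorentz mul0E mul1E quadE => ly q.
have nz' : x i0 0 != 0 \/ x i1 0 != 0.
  case: (eqVneq (x i0 0) 0) => h0; last by left.
  case: (eqVneq (x i1 0) 0) => h1; last by right.
  exfalso; move/eqP: nz; apply; apply/matrixP => i j.
  rewrite (ordcol j) mxE; case: (ord2 i) => ->; [exact h0|exact h1].
exact: (nec_real _ _ _ _ _ (x i0 0) (x i1 0) nz' lx ly q).
Qed.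

Lemma suff_p A : 0 <= qf A -> L_eigenvalue A (pf A).
Proof.
move=> hq; exists (const_mx 1); split.
- apply/eqP => /matrixP /(_ i0 0); rewrite !mxE => /eqP; by rewrite oner_eq0.
- by rewrite /lorentz !mxE normr1.
- rewrite /lorentz mul0E mul1E !mxE !mulr1.
  have -> : A i0 i0 - pf A + A i0 i1 = - qf A by rewrite /pf /qf; lra.
  have -> : A i1 i0 + (A i1 i1 - pf A) = qf A by rewrite /pf /qf; lra.
  by rewrite normrN ger0_norm.
- rewrite quadE !mxE /pf; lra.
Qed.

Lemma suff_s A : 0 <= rf A -> L_eigenvalue A (sf A).
Proof.
move=> hr; exists (\col_i (if i == i0 then -1 else 1)); split.
- apply/eqP => /matrixP /(_ i1 0); rewrite !mxE /= => /eqP; by rewrite oner_eq0.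
- by rewrite /lorentz !mxE /= normrN normr1.
- rewrite /lorentz mul0E mul1E !mxE /=.
  have -> : (A i0 i0 - sf A) * -1 + A i0 i1 * 1 = rf A by rewrite /sf /rf; lra.
  have -> : A i1 i0 * -1 + (A i1 i1 - sf A) * 1 = rf A by rewrite /sf /rf; lra.
  by rewrite ger0_norm.
- rewrite quadE !mxE /= /sf; lra.
Qed.

Lemma poly3 (a0 a1 b0 b1 c0 c1 c2 T : R) :
  (forall t, T <= t -> (a0 + t*a1) * (b0 + t*b1) * (c0 + t*c1 + t^+2*c2) = 0) ->
  (a0 = 0 /\ a1 = 0) \/ (b0 = 0 /\ b1 = 0) \/ (c0 = 0 /\ c1 = 0 /\ c2 = 0).
Proof.
move=> H.
pose pa : {poly R} := a0%:P + a1%:P * 'X.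
pose pb : {poly R} := b0%:P + b1%:P * 'X.
pose pc : {poly R} := c0%:P + c1%:P * 'X + c2%:P * 'X^2.
have ea t : pa.[t] = a0 + t * a1 by rewrite /pa !hornerE; ring.
have eb t : pb.[t] = b0 + t * b1 by rewrite /pb !hornerE; ring.
have ec t : pc.[t] = c0 + t * c1 + t^+2 * c2.
  by rewrite /pc !(hornerD, hornerM, hornerC, hornerX, hornerXn); ring.
have : pa * pb * pc = 0.
  apply: (roots_geq_poly_eq0 (rs := [seq T + i%:R | i <- iota 0 (size (pa*pb*pc))])).
  - apply/allP => x /mapP [i _ ->]; rewrite /root !hornerM ea eb ec H //.
    by rewrite lerDl ler0n.
  - rewrite map_inj_uniq ?iota_uniq // => i j /addrI /eqP; rewrite eqr_nat => /eqP //.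
  - by rewrite size_map size_iota.
move/eqP; rewrite !mulf_eq0 => /orP [/orP [] | ] /eqP E.
- left; have := ea 0; have := ea 1; rewrite E !horner0 => h1 h0; lra.
- right; left; have := eb 0; have := eb 1; rewrite E !horner0 => h1 h0; lra.
- right; right; have := ec 0; have := ec 1; have := ec (-1); rewrite E !horner0 => h1 h2 h0.
  rewrite expr0n /= in h0; rewrite expr1n in h2; rewrite sqrrN expr1n in h1.
  lra.
Qed.

Definition lin (F : 'M[R]_2 -> R) := forall M N t, F (M + t *: N) = F M + t * F N.

Lemma lin_pf : lin pf. Proof. by move=> M N t; rewrite /pf !mxE; ring. Qed.
Lemma lin_sf : lin sf. Proof. by move=> M N t; rewrite /sf !mxE; ring. Qed.
Lemma lin_qf : lin qf. Proof. by move=> M N t; rewrite /qf !mxE; ring. Qed.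
Lemma lin_rf : lin rf. Proof. by move=> M N t; rewrite /rf !mxE; ring. Qed.

Definition cr (X Y : 'M[R]_2) (x y : R) :=
  (X i0 i0 - x) * (Y i1 i1 - y) + (Y i0 i0 - y) * (X i1 i1 - x)
  - X i0 i1 * Y i1 i0 - Y i0 i1 * X i1 i0.

Lemma chr_line X Y (x y t : R) : chr (X + t *: Y) (x + t * y) =
  chr X x + t * cr X Y x y + t ^+ 2 * chr Y y.
Proof. by rewrite /chr /cr !mxE; ring. Qed.

Lemma line_zero F M N t : lin F ->
  (F (M + t*:N) - pf (M + t*:N) = 0 \/ F (M+t*:N) - sf (M+t*:N) = 0 \/
   chr (M + t*:N) (F (M + t*:N)) = 0) ->
  (F M - pf M + t*(F N - pf N)) * (F M - sf M + t*(F N - sf N)) *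
  (chr M (F M) + t * cr M N (F M) (F N) + t^+2 * chr N (F N)) = 0.
Proof.
move=> lF; rewrite lF lin_pf lin_sf chr_line => [[e|[e|e]]].
- have -> : F M - pf M + t * (F N - pf N) = 0 by rewrite -e; ring.
  by rewrite !mul0r.
- have -> : F M - sf M + t * (F N - sf N) = 0 by rewrite -e; ring.
  by rewrite mulr0 mul0r.
- by rewrite e mulr0.
Qed.

Definition mk (a b c d : R) : 'M[R]_2 :=
  \matrix_(i, j) if i == i0 then (if j == i0 then a else b) else (if j == i0 then c else d).

Lemma mkE a b c d : [/\ mk a b c d i0 i0 = a, mk a b c d i0 i1 = b,
  mk a b c d i1 i0 = c & mk a b c d i1 i1 = d].
Proof. by rewrite !mxE. Qed.

Definition E11u := mk (1/2) (1/2) (1/2) (1/2).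
Definition E22u := mk (1/2) (-(1/2)) (-(1/2)) (1/2).
Definition Jd := mk (-1) 0 0 1.

Lemma chr_nz F : lin F -> chr E11u (F E11u) <> 0 \/ chr Jd (F Jd) <> 0 \/
  chr (E11u + 1 *: Jd) (F (E11u + 1 *: Jd)) <> 0.
Proof.
move=> lF; apply: NNPP => c.
have c1 : chr E11u (F E11u) = 0 by apply: NNPP => h; apply: c; left.
have c2 : chr Jd (F Jd) = 0 by apply: NNPP => h; apply: c; right; left.
have c3 : chr (E11u + 1 *: Jd) (F (E11u + 1 *: Jd)) = 0 by apply: NNPP => h; apply: c; right; right.
move: c1 c2 c3; rewrite lF /chr /E11u /Jd !mxE /=.
set a := F (mk _ _ _ _); set g := F (mk _ _ _ _).
move=> c1 c2 c3.
have ea : a ^+ 2 = a by rewrite expr2; nra.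
have eg : g ^+ 2 = 1 by rewrite expr2; nra.
have e3 : g * (2 * a - 1) = 0 by nra.
have : g * g * (2 * a - 1) = 0 by rewrite -mulrA e3 mulr0.
rewrite -expr2 eg mul1r => h.
have : a = 1/2 by lra.
move=> ha; rewrite ha in ea; move: ea; rewrite expr2; lra.
Qed.

Lemma key (w : 'M[R]_2 -> Prop) (F G : 'M[R]_2 -> R) :
  (forall M N t, w M -> w N -> w (M + t *: N)) -> w E11u -> w Jd ->
  lin F -> lin G ->
  (forall M, w M -> 0 <= G M -> F M = pf M \/ F M = sf M \/ chr M (F M) = 0) ->
  (forall M, w M -> F M = pf M) \/ (forall M, w M -> F M = sf M).
Proof.
move=> wc w1 wJ lF lG H.
have H0 : forall M, w M -> 0 <= G M ->
    F M - pf M = 0 \/ F M - sf M = 0 \/ chr M (F M) = 0.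
  move=> M wM gM; case: (H M wM gM) => [e|[e|e]].
  - by left; rewrite e subrr.
  - by right; left; rewrite e subrr.
  - by right; right.
have H' : forall M, w M -> F M - pf M = 0 \/ F M - sf M = 0 \/ chr M (F M) = 0.
  move=> M wM.
  case: (classic (exists M0, w M0 /\ 0 < G M0)) => [[M0 [wM0 gM0]]|nex].
  - have := poly3 (F M - pf M) (F M0 - pf M0) (F M - sf M) (F M0 - sf M0)
      (chr M (F M)) (cr M M0 (F M) (F M0)) (chr M0 (F M0)) (- G M / G M0).
    case.
    + move=> t ht; apply: line_zero => //; apply: H0; first exact: wc.
      rewrite lG.
      have e : - G M / G M0 * G M0 = - G M by rewrite mulfVK // gt_eqF.
      nra.
    + by move=> [-> _]; left.
    + by case=> [[-> _]|[-> _]]; right; [left|right].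
  - apply: H0 => //.
    have g1 : G M <= 0 by rewrite leNgt; apply/negP => g; apply: nex; exists M.
    have g2 : G (M + (-2) *: M) <= 0.
      rewrite leNgt; apply/negP => g; apply: nex; exists (M + (-2) *: M); split=> //.
      exact: wc.
    rewrite lG in g2; lra.
case: (classic (forall M, w M -> F M = pf M)) => [h|h1]; [by left|right].
apply: NNPP => h2.
have [N1 [wN1 n1]] : exists N, w N /\ F N - pf N <> 0.
  apply: NNPP => c; apply: h1 => M wM; apply: NNPP => c'; apply: c; exists M; split=> //.
  by move=> e; apply: c'; lra.
have [N2 [wN2 n2]] : exists N, w N /\ F N - sf N <> 0.
  apply: NNPP => c; apply: h2 => M wM; apply: NNPP => c'; apply: c; exists M; split=> //.
  by move=> e; apply: c'; lra.
have [K [wK [k1 k2]]] : exists K, w K /\ F K - pf K <> 0 /\ F K - sf K <> 0.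
  case: (classic (F N1 - sf N1 = 0)) => e1; last by exists N1.
  case: (classic (F N2 - pf N2 = 0)) => e2; last by exists N2.
  exists (N1 + 1 *: N2); rewrite !lF lin_pf lin_sf; split; first exact: wc.
  by split; lra.
have [N3 [wN3 n3]] : exists N, w N /\ chr N (F N) <> 0.
  case: (chr_nz F lF) => [c|[c|c]].
  - by exists E11u.
  - by exists Jd.
  - by exists (E11u + 1 *: Jd); split=> //; exact: wc.
have := poly3 (F N3 - pf N3) (F K - pf K) (F N3 - sf N3) (F K - sf K)
      (chr N3 (F N3)) (cr N3 K (F N3) (F K)) (chr K (F K)) 0.
case.
- move=> t _; apply: line_zero => //; apply: H'; exact: wc.
- by case.
- by case=> [[]|[]].
Qed.

Lemma no_both B : pf B = 0 -> sf B = 0 -> L_eigenvalue B 1 -> L_eigenvalue B 0 ->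
  L_eigenvalue (- B) 0 -> False.
Proof.
move=> hp hs /nec e1 /nec e2 /nec e3.
move: hp hs e1 e2 e3; rewrite /pf /sf /qf /rf /chr !mxE.
move: (B i0 i0) (B i0 i1) (B i1 i0) (B i1 i1) => a b c d hp hs e1 e2 e3.
have hd : d = - a by lra.
have hc : c = - b by lra.
rewrite hd hc in e1 e2 e3.
have E : a * a - b * b = 1.
  case: e1 => [[h _]|[[h _]|h]]; [lra|lra|nra].
case: e2 => [[h1 h2]|[[h1 h2]|h]]; case: e3 => [[h3 h4]|[[h3 h4]|h']]; try nra.
all: try (have hb : b = - a by lra); try (have hb : b = a by lra); rewrite hb in E; nra.
Qed.

End Aux.
Arguments pf {R}. Arguments sf {R}. Arguments qf {R}. Arguments rf {R}.
Arguments chr {R}. Arguments cr {R}. Arguments mk {R}. Arguments E11u {R}. Arguments E22u {R}. Arguments Jd {R}.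
Arguments lin {R}. Arguments key {R}. Arguments no_both {R}. Arguments nec {R}. Arguments suff_p {R}. Arguments suff_s {R}.

Lemma trE (R : realFieldType) (M : 'M[R]_2) : \tr M = pf M + sf M.
Proof. rewrite /mxtrace !big_ord_recl big_ord0 lift01 /pf /sf /i0; lra. Qed.

Lemma antiE (R : realFieldType) (M : 'M[R]_2) : antitr M = pf M - sf M.
Proof. rewrite /antitr /pf /sf; lra. Qed.

Theorem corollary4p4 (R : realType) (sym : bool)
  (phi : {linear 'M[R]_2 -> 'M[R]_2})
  (phi_W2 : forall A : 'M[R]_2, inW2 sym A -> inW2 sym (phi A))
  (phi_spec : forall A : 'M[R]_2, inW2 sym A -> forall lam : R, L_spectrum (phi A) lam <-> L_spectrum A lam) :
  (forall A : 'M[R]_2, inW2 sym A -> \tr (phi A) = \tr A) /\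
  ((forall A : 'M[R]_2, inW2 sym A -> antitr (phi A) = antitr A) \/
   (forall A : 'M[R]_2, inW2 sym A -> antitr (phi A) = - antitr A)).
Proof.
have wc : forall (M N : 'M[R]_2) (t : R), inW2 sym M -> inW2 sym N -> inW2 sym (M + t *: N).
  rewrite /inW2; case: (sym) => //= M N t hM hN.
  by rewrite linearD linearZ /= hM hN.
have wN : forall M : 'M[R]_2, inW2 sym M -> inW2 sym (- M).
  rewrite /inW2; case: (sym) => //= M hM.
  by rewrite linearN /= hM.
have wmk : forall a b d : R, inW2 sym (mk a b b d).
  move=> a b d; rewrite /inW2; case: (sym) => //.
  apply/matrixP => i j; rewrite !mxE.
  by case: (ord2 i) => ->; case: (ord2 j) => ->.
have spec : forall A : 'M[R]_2, inW2 sym A -> forall l, L_eigenvalue A l -> L_eigenvalue (phi A) l.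
  by move=> A wA l h; apply/(phi_spec A wA).
have linc : forall f : 'M[R]_2 -> R, lin f -> lin (fun M => f (phi M)).
  by move=> f lf M N t /=; rewrite linearD linearZ /= lf.
have hP : (forall M, inW2 sym M -> pf (phi M) = pf M) \/
          (forall M, inW2 sym M -> pf (phi M) = sf M).
  apply: (key _ _ (fun M => qf (phi M)) wc (wmk _ _ _) (wmk _ _ _)).
  - exact: linc (@lin_pf R).
  - exact: linc (@lin_qf R).
  move=> M wM g; have : L_eigenvalue M (pf (phi M)) by apply/(phi_spec M wM); exact: suff_p.
  by move/nec => [[? _]|[[? _]|?]]; [left|right;left|right;right].
have hS : (forall M, inW2 sym M -> sf (phi M) = pf M) \/
          (forall M, inW2 sym M -> sf (phi M) = sf M).
  apply: (key _ _ (fun M => rf (phi M)) wc (wmk _ _ _) (wmk _ _ _)).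
  - exact: linc (@lin_sf R).
  - exact: linc (@lin_rf R).
  move=> M wM g; have : L_eigenvalue M (sf (phi M)) by apply/(phi_spec M wM); exact: suff_s.
  by move/nec => [[? _]|[[? _]|?]]; [left|right;left|right;right].
have wE22 : inW2 sym (@E22u R) by exact: wmk.
have wE11 : inW2 sym (@E11u R) by exact: wmk.
case: hP => hP; case: hS => hS.
- exfalso; apply: (no_both (phi E22u)).
  + by rewrite hP // /pf /E22u !mxE /=; lra.
  + by rewrite hS // /pf /E22u !mxE /=; lra.
  + have h : sf (@E22u R) = 1 by rewrite /sf /E22u !mxE /=; lra.
    rewrite -h; apply: spec => //; apply: suff_s; rewrite /rf /E22u !mxE /=; lra.
  + have h : pf (@E22u R) = 0 by rewrite /pf /E22u !mxE /=; lra.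
    rewrite -h; apply: spec => //; apply: suff_p; rewrite /qf /E22u !mxE /=; lra.
  + have h : pf (- (@E22u R)) = 0 by rewrite /pf /E22u !mxE /=; lra.
    rewrite -linearN -h; apply: spec; first exact: wN.
    apply: suff_p; rewrite /qf /E22u !mxE /=; lra.
- split; first by move=> A wA; rewrite !trE hP // hS.
  by left=> A wA; rewrite !antiE hP // hS.
- split; first by move=> A wA; rewrite !trE hP // hS // addrC.
  by right=> A wA; rewrite !antiE hP // hS // opprB.
- exfalso; apply: (no_both (phi E11u)).
  + by rewrite hP // /sf /E11u !mxE /=; lra.
  + by rewrite hS // /sf /E11u !mxE /=; lra.
  + have h : pf (@E11u R) = 1 by rewrite /pf /E11u !mxE /=; lra.
    rewrite -h; apply: spec => //; apply: suff_p; rewrite /qf /E11u !mxE /=; lra.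
  + have h : sf (@E11u R) = 0 by rewrite /sf /E11u !mxE /=; lra.
    rewrite -h; apply: spec => //; apply: suff_s; rewrite /rf /E11u !mxE /=; lra.
  + have h : sf (- (@E11u R)) = 0 by rewrite /sf /E11u !mxE /=; lra.
    rewrite -linearN -h; apply: spec; first exact: wN.
    apply: suff_s; rewrite /rf /E11u !mxE /=; lra.
Qed.
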